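(* For every integer $n\geq 2$, the operator $W_n^{*}$ on $H^2$ is Devaney chaotic.
   Context: $H^2$ denotes the Hardy space of analytic functions $f(z)=\sum_{k\ge0}\hat f(k)z^k$ on the open unit disk with $\sum_{k}|\hat f(k)|^2<\infty$. For $n\in\mathbb{N}$, $W_n$ is the bounded operator on $H^2$ given by $W_nf(z)=(1+z+\cdots+z^{n-1})f(z^n)$, and $W_n^{*}$ is its adjoint. An operator $T$ on a separable Banach space $Y$ is Devaney chaotic if it is hypercyclic (some vector has dense orbit) and its set of periodic points (vectors $f$ with $T^kf=f$ for some $k\in\mathbb{N}$) is dense in $Y$. *)

(* Defs.v *)
From Stdlib Require Import Reals.
From Coquelicot Require Import Coquelicot.

(* An element f of H^2 is represented by its Taylor coefficient sequence
   (f^(k))_k : nat -> C; f is in H^2 iff sum_k |f^(k)|^2 < oo. *)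
Definition in_H2 (a : nat -> C) : Prop :=
  ex_series (fun k => (Cmod (a k) ^ 2)%R).

Definition H2norm (a : nat -> C) : R :=
  sqrt (Series (fun k => (Cmod (a k) ^ 2)%R)).

Definition H2sub (a b : nat -> C) : nat -> C := fun k => (a k - b k)%C.

Definition H2inner_is (a b : nat -> C) (l : C) : Prop :=
  is_series (fun k => (a k * Cconj (b k))%C) l.

(* W_n f (z) = (1 + z + ... + z^(n-1)) f(z^n), on coefficients:
   the coefficient of z^(n*k + j), 0 <= j < n, is f^(k); i.e. (W_n f)^(m) = f^(m / n). *)
Definition W (n : nat) (a : nat -> C) : nat -> C := fun m => a (m / n)%nat.

Definition is_adjoint_W (n : nat) (T : (nat -> C) -> (nat -> C)) : Prop :=
  (forall g, in_H2 g -> in_H2 (T g)) /\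
  (forall f g, in_H2 f -> in_H2 g ->
     exists l, H2inner_is (W n f) g l /\ H2inner_is f (T g) l).

Definition hypercyclic (T : (nat -> C) -> (nat -> C)) : Prop :=
  exists f, in_H2 f /\
    forall g, in_H2 g -> forall eps : R, (0 < eps)%R ->
      exists k : nat, (H2norm (H2sub (Nat.iter k T f) g) < eps)%R.

Definition periodic_point (T : (nat -> C) -> (nat -> C)) (f : nat -> C) : Prop :=
  exists k : nat, (1 <= k)%nat /\ Nat.iter k T f = f.

Definition dense_periodic_points (T : (nat -> C) -> (nat -> C)) : Prop :=
  forall g, in_H2 g -> forall eps : R, (0 < eps)%R ->
    exists f, in_H2 f /\ periodic_point T f /\ (H2norm (H2sub f g) < eps)%R.

Definition devaney_chaotic (T : (nat -> C) -> (nat -> C)) : Prop :=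
  hypercyclic T /\ dense_periodic_points T.

(* Main.v *)
Require Import Defs.
From Stdlib Require Import Reals Lra Lia Arith ZArith.
From Coquelicot Require Import Coquelicot.
From Stdlib Require Import FunctionalExtensionality.
From Stdlib Require Cantor.

Open Scope R_scope.

Fixpoint csum (a : nat -> C) (N : nat) : C :=
  match N with O => 0%C | S N => Cplus (csum a N) (a N) end.
Fixpoint rsum (a : nat -> R) (N : nat) : R :=
  match N with O => 0 | S N => rsum a N + a N end.

Lemma sum_n_csum (a : nat -> C) N : @sum_n C_AbelianMonoid a N = csum a (S N).
Proof.
  induction N as [|N IH].
  - rewrite sum_O. simpl. apply injective_projections; simpl; ring.
  - rewrite sum_Sn, IH. reflexivity.
Qed.

Lemma sum_n_rsum (a : nat -> R) N : @sum_n R_AbelianMonoid a N = rsum a (S N).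
Proof.
  induction N as [|N IH].
  - rewrite sum_O. simpl. ring.
  - rewrite sum_Sn, IH. reflexivity.
Qed.

Lemma is_series_finite (a : nat -> C) N :
  (forall i, (N <= i)%nat -> a i = 0%C) -> is_series a (csum a N).
Proof.
  intros H. unfold is_series.
  apply filterlim_ext_loc with (f := fun _ => csum a N).
  - exists N. intros K HK. rewrite sum_n_csum.
    induction HK. simpl. rewrite (H N) by lia.
    apply injective_projections; simpl; ring.
    simpl. rewrite IHHK. rewrite (H (S m)) by lia.
    apply injective_projections; simpl; ring.
  - apply filterlim_const.
Qed.

Lemma is_series_C_unique (a : nat -> C) l1 l2 :
  is_series a l1 -> is_series a l2 -> l1 = l2.
Proof.
  intros H1 H2. unfold is_series in *.
  exact (filterlim_locally_unique (F := eventually) (sum_n a) l1 l2 H1 H2).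
Qed.

Lemma rsum_finite_series (a : nat -> R) N :
  (forall i, (N <= i)%nat -> a i = 0) -> is_series a (rsum a N).
Proof.
  intros H. unfold is_series.
  apply filterlim_ext_loc with (f := fun _ => rsum a N).
  - exists N. intros K HK. rewrite sum_n_rsum.
    induction HK. simpl. rewrite (H N) by lia. ring.
    change (rsum a (S (S m))) with (rsum a (S m) + a (S m)).
    rewrite (H (S m)) by lia. rewrite Rplus_0_r. exact IHHK.
  - apply filterlim_const.
Qed.

Lemma csum_ext (a b : nat -> C) N : (forall i, (i < N)%nat -> a i = b i) -> csum a N = csum b N.
Proof. induction N; intros H; simpl; auto. rewrite IHN by (intros; apply H; lia). rewrite H by lia. auto. Qed.

Lemma csum_zero (a : nat -> C) N : (forall i, (i < N)%nat -> a i = 0%C) -> csum a N = 0%C.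
Proof. induction N; intros H; simpl; auto. rewrite IHN by (intros; apply H; lia). rewrite H by lia.
  apply injective_projections; simpl; ring. Qed.

Lemma csum_split (a : nat -> C) A B : csum a (A + B) = Cplus (csum a A) (csum (fun i => a (A + i)%nat) B).
Proof. induction B; simpl.
  - rewrite Nat.add_0_r. apply injective_projections; simpl; ring.
  - rewrite Nat.add_succ_r. simpl. rewrite IHB. apply injective_projections; simpl; ring. Qed.

Lemma csum_conj (a : nat -> C) N : Cconj (csum a N) = csum (fun i => Cconj (a i)) N.
Proof. induction N; simpl. apply injective_projections; simpl; ring.
  rewrite Cplus_conj, IHN. auto. Qed.

Lemma div_eq q j r : (r < q)%nat -> ((q * j + r) / q = j)%nat.
Proof. intros H. rewrite Nat.mul_comm, Nat.div_add_l by lia. rewrite Nat.div_small by lia. lia. Qed.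

Definition ek (j : nat) : nat -> C := fun m => if Nat.eqb m j then 1%C else 0%C.

Lemma ek_H2 j : in_H2 (ek j).
Proof.
  exists (rsum (fun k => Cmod (ek j k) ^ 2) (S j)). apply rsum_finite_series.
  intros i Hi. unfold ek. destruct (Nat.eqb_spec i j). lia. rewrite Cmod_0. ring.
Qed.

Lemma Wstar_formula n (hn : (1 <= n)%nat) T (hW : is_adjoint_W n T) g (hg : in_H2 g) j :
  T g j = csum (fun i => g (n * j + i)%nat) n.
Proof.
  destruct hW as [_ hW]. destruct (hW (ek j) g (ek_H2 j) hg) as [l [H1 H2]].
  unfold H2inner_is in *.
  assert (E2 : l = csum (fun k => Cmult (ek j k) (Cconj (T g k))) (S j)).
  { eapply is_series_C_unique. exact H2. apply is_series_finite.
    intros i Hi. unfold ek. destruct (Nat.eqb_spec i j). lia.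
    apply injective_projections; simpl; ring. }
  assert (E1 : l = csum (fun k => Cmult (W n (ek j) k) (Cconj (g k))) (n * j + n)).
  { eapply is_series_C_unique. exact H1. apply is_series_finite.
    intros i Hi. unfold W, ek. destruct (Nat.eqb_spec (i / n) j).
    - exfalso. pose proof (Nat.div_mod_eq i n). 
      pose proof (Nat.mod_upper_bound i n). rewrite e in H. lia.
    - apply injective_projections; simpl; ring. }
  rewrite (csum_split _ (n * j) n) in E1.
  assert (Z1 : csum (fun k => Cmult (W n (ek j) k) (Cconj (g k))) (n * j) = 0%C).
  { apply csum_zero. intros i Hi. unfold W, ek. destruct (Nat.eqb_spec (i / n) j).
      - exfalso. assert (n * j <= i)%nat. { rewrite <- e. apply Nat.Div0.mul_div_le. } lia.
      - apply injective_projections; simpl; ring. }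
  rewrite Z1 in E1.
  cbn [csum] in E2.
  assert (Z2 : csum (fun k => Cmult (ek j k) (Cconj (T g k))) j = 0%C).
  { apply csum_zero. intros i Hi. unfold ek. destruct (Nat.eqb_spec i j). lia. apply injective_projections; simpl; ring. }
  rewrite Z2 in E2.
  unfold ek in E2. rewrite Nat.eqb_refl in E2.
  assert (Z3 : csum (fun i => Cmult (W n (ek j) (n * j + i)%nat) (Cconj (g (n * j + i)%nat))) n
             = csum (fun i => Cconj (g (n * j + i)%nat)) n).
  { apply csum_ext. intros i Hi. unfold W, ek. rewrite div_eq by lia. rewrite Nat.eqb_refl.
      apply injective_projections; simpl; ring. }
  rewrite Z3 in E1.
  rewrite <- csum_conj in E1.
  rewrite <- (Cconj_conj (T g j)), <- (Cconj_conj (csum _ n)). f_equal.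
  transitivity l.
  - rewrite E2. apply injective_projections; simpl; ring.
  - rewrite E1. apply injective_projections; simpl; ring.
Qed.

Lemma csum_double (u : nat -> C) A B :
  csum (fun i => csum (fun r => u (B * i + r)%nat) B) A = csum u (B * A).
Proof.
  induction A; simpl. rewrite Nat.mul_0_r. reflexivity.
  rewrite IHA. replace (B * S A)%nat with (B * A + B)%nat by lia.
  rewrite csum_split. reflexivity.
Qed.

Lemma iter_H2 n T (hW : is_adjoint_W n T) a g : in_H2 g -> in_H2 (Nat.iter a T g).
Proof. intros Hg. induction a; simpl; auto. apply (proj1 hW). auto. Qed.

Lemma iter_formula n (hn : (1 <= n)%nat) T (hW : is_adjoint_W n T) a g (hg : in_H2 g) j :
  Nat.iter a T g j = csum (fun r => g (n ^ a * j + r)%nat) (n ^ a).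
Proof.
  revert j. induction a; intros j.
  - simpl. apply injective_projections; simpl; rewrite !Nat.add_0_r; ring.
  - rewrite Nat.iter_succ. rewrite (Wstar_formula n hn T hW).
    2: apply (iter_H2 n T hW); auto.
    rewrite (csum_ext _ (fun i => csum (fun r => g (n ^ a * (n * j + i) + r)%nat) (n ^ a))).
    2: intros; apply IHa.
    rewrite (csum_ext _ (fun i => csum (fun r => (fun t => g (n ^ S a * j + t)%nat) (n ^ a * i + r)%nat) (n ^ a))).
    2:{ intros i Hi. apply csum_ext. intros r Hr. f_equal. rewrite Nat.pow_succ_r'. nia. }
    pose proof (csum_double (fun t => g (n ^ S a * j + t)%nat) n (n ^ a)) as Hd. cbv beta in Hd. rewrite Hd. rewrite Nat.pow_succ_r'. f_equal. apply Nat.mul_comm.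
Qed.

Definition PS (a : nat -> C) (K : nat) : R := rsum (fun i => Cmod (a i) ^ 2) K.

Lemma rsum_le (f g : nat -> R) K : (forall i, (i < K)%nat -> f i <= g i) -> rsum f K <= rsum g K.
Proof. induction K; intros H; simpl. lra. assert (f K <= g K) by (apply H; lia).
  assert (rsum f K <= rsum g K) by (apply IHK; intros; apply H; lia). lra. Qed.
Lemma rsum_plus (f g : nat -> R) K : rsum (fun i => f i + g i) K = rsum f K + rsum g K.
Proof. induction K; simpl; lra. Qed.
Lemma rsum_scal (c : R) (f : nat -> R) K : rsum (fun i => c * f i) K = c * rsum f K.
Proof. induction K; simpl. ring. rewrite IHK. ring. Qed.
Lemma rsum_nonneg (f : nat -> R) K : (forall i, 0 <= f i) -> 0 <= rsum f K.
Proof. intros H; induction K; simpl. lra. specialize (H K). lra. Qed.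
Lemma rsum_mono (f : nat -> R) K1 K2 : (forall i, 0 <= f i) -> (K1 <= K2)%nat -> rsum f K1 <= rsum f K2.
Proof. intros H Hk. induction Hk. lra. simpl. specialize (H m). lra. Qed.
Lemma PS_nonneg a K : 0 <= PS a K.
Proof. apply rsum_nonneg. intros. apply pow2_ge_0. Qed.
Lemma PS_mono a K1 K2 : (K1 <= K2)%nat -> PS a K1 <= PS a K2.
Proof. intros. apply rsum_mono; auto. intros; apply pow2_ge_0. Qed.

Lemma bnd_H2 a B : (forall K, PS a K <= B) ->
  in_H2 a /\ Series (fun k => Cmod (a k) ^ 2) <= B.
Proof.
  intros H.
  assert (Hex : ex_finite_lim_seq (sum_n (fun k => Cmod (a k) ^ 2))).
  { apply ex_finite_lim_seq_incr with (M := B).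
    - intros m. rewrite !sum_n_rsum. simpl. pose proof (pow2_ge_0 (Cmod (a (S m)))). lra.
    - intros m. rewrite sum_n_rsum. exact (H (S m)). }
  destruct Hex as [l Hl].
  assert (Hs : is_series (fun k => Cmod (a k) ^ 2) l) by exact Hl.
  split. exists l. exact Hs.
  rewrite (is_series_unique _ _ Hs).
  assert (Rbar_le l B).
  { eapply is_lim_seq_le with (u := sum_n (fun k => Cmod (a k) ^ 2)) (v := fun _ => B); eauto.
    intros m; rewrite sum_n_rsum; exact (H (S m)). apply is_lim_seq_const. }
  exact H0.
Qed.

Lemma H2_PS_le a : in_H2 a -> forall K, PS a K <= Series (fun k => Cmod (a k) ^ 2).
Proof.
  intros [l Hl] K. rewrite (is_series_unique _ _ Hl).
  assert (Hl' : is_lim_seq (sum_n (fun k => Cmod (a k) ^ 2)) l) by exact Hl.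
  pose proof (is_lim_seq_incr_compare _ _ Hl') as Hc.
  assert (Hinc : forall m, sum_n (fun k => Cmod (a k) ^ 2) m <= sum_n (fun k => Cmod (a k) ^ 2) (S m)).
  { intros m. rewrite !sum_n_rsum. simpl. pose proof (pow2_ge_0 (Cmod (a (S m)))). lra. }
  destruct K. unfold PS; simpl. specialize (Hc Hinc 0%nat). rewrite sum_n_rsum in Hc. simpl in Hc.
  pose proof (pow2_ge_0 (Cmod (a 0%nat))). lra.
  specialize (Hc Hinc K). rewrite sum_n_rsum in Hc. exact Hc.
Qed.

Lemma H2_tail a : in_H2 a -> forall d, 0 < d -> exists N, forall K, PS a K <= PS a N + d.
Proof.
  intros Ha d Hd. pose proof (H2_PS_le a Ha) as Hle.
  destruct Ha as [l Hl].
  assert (Hl' : is_lim_seq (sum_n (fun k => Cmod (a k) ^ 2)) l) by exact Hl.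
  apply is_lim_seq_spec in Hl'. destruct (Hl' (mkposreal d Hd)) as [N HN].
  exists (S N). intros K. specialize (HN N (le_n _)).
  assert (HN' : Rabs (sum_n (fun k => Cmod (a k) ^ 2) N - l) < d) by exact HN.
  rewrite sum_n_rsum in HN'. specialize (Hle K).
  rewrite (is_series_unique _ _ Hl) in Hle. unfold PS in *.
  apply Rabs_lt_between in HN'. lra.
Qed.

Lemma H2norm_lt a B eps : (forall K, PS a K <= B) -> B < eps ^ 2 -> 0 < eps -> H2norm a < eps.
Proof.
  intros H HB He. destruct (bnd_H2 a B H) as [_ HS]. unfold H2norm.
  apply Rle_lt_trans with (sqrt B). apply sqrt_le_1_alt. exact HS.
  rewrite <- (sqrt_pow2 eps) by lra. apply sqrt_lt_1_alt. split.
  eapply Rle_trans. apply (PS_nonneg a 0). apply H. exact HB.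
Qed.

Lemma Cmod_sq_plus (a b : C) : Cmod (a + b)%C ^ 2 <= 2 * Cmod a ^ 2 + 2 * Cmod b ^ 2.
Proof.
  pose proof (Cmod_triangle a b). pose proof (Cmod_ge_0 (a+b)%C).
  pose proof (Cmod_ge_0 a). pose proof (Cmod_ge_0 b).
  assert (Cmod (a+b)%C ^ 2 <= (Cmod a + Cmod b) ^ 2) by (apply pow_incr; lra).
  pose proof (pow2_ge_0 (Cmod a - Cmod b)). nra.
Qed.

Fixpoint Gf (n fuel : nat) (zs : nat -> nat -> C) (D : nat -> nat) (i : nat) : C :=
  match fuel with
  | O => 0%C
  | S fu => if Nat.ltb i (n ^ D 0%nat) then zs 0%nat i
            else Cmult (RtoC (/ INR (n ^ D 0%nat)))
                   (Gf n fu (fun l => zs (S l)) (fun l => D (S l)) (i / n ^ D 0%nat))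
  end.
Definition G n zs D i := Gf n (S i) zs D i.
Definition F n c0 zs D i := if Nat.eqb i 0 then c0 else G n zs D i.

Lemma pow_ge2 n d : (2 <= n)%nat -> (1 <= d)%nat -> (2 <= n ^ d)%nat.
Proof. intros. apply Nat.le_trans with (n ^ 1)%nat. simpl; lia. apply Nat.pow_le_mono_r; lia. Qed.

Lemma Gf_fuel n (hn : (2 <= n)%nat) f1 : forall f2 (zs : nat -> nat -> C) D i, (forall l, (1 <= D l)%nat) ->
  (i < f1)%nat -> (i < f2)%nat -> Gf n f1 (zs : nat -> nat -> C) D i = Gf n f2 (zs : nat -> nat -> C) D i.
Proof.
  induction f1; intros f2 zs D i HD H1 H2. lia. destruct f2. lia.
  simpl. destruct (Nat.ltb_spec i (n ^ D 0%nat)). auto.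
  f_equal. apply IHf1. intros; apply HD.
  - pose proof (pow_ge2 n (D 0%nat) hn (HD 0%nat)).
    assert (i / n ^ D 0%nat < i)%nat by (apply Nat.div_lt; lia). lia.
  - pose proof (pow_ge2 n (D 0%nat) hn (HD 0%nat)).
    assert (i / n ^ D 0%nat < i)%nat by (apply Nat.div_lt; lia). lia.
Qed.

Lemma G_unfold n (hn : (2 <= n)%nat) (zs : nat -> nat -> C) D (HD : forall l, (1 <= D l)%nat) i :
  G n (zs : nat -> nat -> C) D i = if Nat.ltb i (n ^ D 0%nat) then zs 0%nat i
     else Cmult (RtoC (/ INR (n ^ D 0%nat))) (G n (fun l => zs (S l)) (fun l => D (S l)) (i / n ^ D 0%nat)).
Proof.
  unfold G at 1. simpl. destruct (Nat.ltb_spec i (n ^ D 0%nat)). auto.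
  f_equal. unfold G. apply Gf_fuel; auto.
  pose proof (pow_ge2 n (D 0%nat) hn (HD 0%nat)).
  assert (i / n ^ D 0%nat < i)%nat by (apply Nat.div_lt; lia). lia.
Qed.

Lemma G_block n (hn : (2 <= n)%nat) (zs : nat -> nat -> C) D (HD : forall l, (1 <= D l)%nat) j r :
  (1 <= j)%nat -> (r < n ^ D 0%nat)%nat ->
  G n (zs : nat -> nat -> C) D (n ^ D 0%nat * j + r)%nat =
  Cmult (RtoC (/ INR (n ^ D 0%nat))) (G n (fun l => zs (S l)) (fun l => D (S l)) j).
Proof.
  intros Hj Hr. rewrite G_unfold by auto.
  destruct (Nat.ltb_spec (n ^ D 0%nat * j + r) (n ^ D 0%nat)). nia.
  rewrite div_eq by auto. reflexivity.
Qed.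

Lemma rsum_split (f : nat -> R) A B : rsum f (A + B) = rsum f A + rsum (fun i => f (A + i)%nat) B.
Proof. induction B; simpl. rewrite Nat.add_0_r. ring.
  rewrite Nat.add_succ_r. simpl. rewrite IHB. ring. Qed.

Lemma rsum_double (u : nat -> R) A B :
  rsum (fun i => rsum (fun r => u (B * i + r)%nat) B) A = rsum u (B * A).
Proof.
  induction A; simpl. rewrite Nat.mul_0_r. reflexivity.
  rewrite IHA. replace (B * S A)%nat with (B * A + B)%nat by lia.
  rewrite rsum_split. reflexivity.
Qed.

Lemma rsum_ext (f g : nat -> R) K : (forall i, (i < K)%nat -> f i = g i) -> rsum f K = rsum g K.
Proof. induction K; intros H; simpl; auto. rewrite IHK by (intros; apply H; lia). rewrite H by lia. auto. Qed.

Lemma rsum_const (c : R) K : rsum (fun _ => c) K = INR K * c.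
Proof. induction K; simpl. ring. rewrite IHK. destruct K; simpl; ring. Qed.

Lemma rsum_delta (X : R) m : rsum (fun j => if Nat.eqb j 0 then X else 0) (S m) = X.
Proof. induction m. simpl. ring. simpl. simpl in IHm. rewrite IHm. ring. Qed.

Lemma Cmod_scal_sq (c : R) (x : C) : 0 <= c -> Cmod (Cmult (RtoC c) x) ^ 2 = c ^ 2 * Cmod x ^ 2.
Proof. intros. rewrite Cmod_mult, Cmod_R, Rabs_right by lra. ring. Qed.

Lemma INR_pos_pow n d : (2 <= n)%nat -> 0 < INR (n ^ d).
Proof. intros. apply lt_0_INR. apply Nat.neq_0_lt_0. apply Nat.pow_nonzero. lia. Qed.

Lemma G_norm n (hn : (2 <= n)%nat) K : forall (zs : nat -> nat -> C) D (beta : nat -> R),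
  (forall l, (1 <= D l)%nat) -> (forall k, 0 <= beta k) ->
  (forall k, PS (zs k) (n ^ D k) + beta (S k) / INR (n ^ D k) <= beta k) ->
  PS (G n (zs : nat -> nat -> C) D) K <= beta 0%nat.
Proof.
  induction K as [K IH] using lt_wf_ind. intros zs D beta HD Hb Hz.
  set (q := (n ^ D 0%nat)%nat) in *.
  assert (Hq : (2 <= q)%nat) by (apply pow_ge2; auto).
  assert (Hqr : 0 < INR q) by (apply INR_pos_pow; lia).
  pose proof (Hz 0%nat) as Hz0. fold q in Hz0.
  assert (Hb1 : 0 <= beta 1%nat / INR q) by (apply Rdiv_le_0_compat; auto).
  destruct (Nat.le_gt_cases K q) as [HK | HK].
  - apply Rle_trans with (PS (G n zs D) q). apply PS_mono; auto.
    replace (PS (G n zs D) q) with (PS (zs 0%nat) q). lra.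
    unfold PS. apply rsum_ext. intros i Hi. rewrite G_unfold by auto.
    fold q. destruct (Nat.ltb_spec i q). auto. lia.
  - set (K' := S (K / q)).
    assert (HK1 : (K <= q * K')%nat).
    { unfold K'. pose proof (Nat.div_mod_eq K q). pose proof (Nat.mod_upper_bound K q). lia. }
    assert (HK2 : (K' < K)%nat).
    { unfold K'. assert (K / q <= K / 2)%nat by (apply Nat.div_le_compat_l; lia).
      assert (2 * (K / 2) <= K)%nat by apply Nat.Div0.mul_div_le. lia. }
    apply Rle_trans with (PS (G n zs D) (q * K')). apply PS_mono; auto.
    unfold PS. rewrite <- rsum_double.
    set (G' := G n (fun l => zs (S l)) (fun l => D (S l))).
    apply Rle_trans with (rsum (fun j => (if Nat.eqb j 0 then PS (zs 0%nat) q else 0) + Cmod (G' j) ^ 2 / INR q) K').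
    + apply rsum_le. intros j Hj. destruct (Nat.eqb_spec j 0).
      * subst j. replace (rsum (fun r => Cmod (G n zs D (q * 0 + r)%nat) ^ 2) q) with (PS (zs 0%nat) q).
        assert (0 <= Cmod (G' 0%nat) ^ 2 / INR q) by (apply Rdiv_le_0_compat; [apply pow2_ge_0 | exact Hqr]). lra.
        unfold PS. apply rsum_ext. intros i Hi. rewrite Nat.mul_0_r, Nat.add_0_l.
        rewrite G_unfold by auto. fold q. destruct (Nat.ltb_spec i q). auto. lia.
      * rewrite (rsum_ext _ (fun _ => (/ INR q) ^ 2 * Cmod (G' j) ^ 2)).
        rewrite rsum_const. right. field. lra.
        intros r Hr. unfold q. rewrite G_block by (auto; lia). rewrite Cmod_scal_sq. reflexivity.
        left. apply Rinv_0_lt_compat. auto.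
    + rewrite rsum_plus. unfold K'. rewrite rsum_delta.
      rewrite (rsum_ext _ (fun j => / INR q * Cmod (G' j) ^ 2)) by (intros; unfold Rdiv; ring).
      rewrite rsum_scal. fold K'.
      assert (IHa : PS G' K' <= beta 1%nat).
      { apply (IH K' HK2 (fun l => zs (S l)) (fun l => D (S l)) (fun l => beta (S l))); auto. }
      unfold PS in IHa. unfold Rdiv in Hz0, Hb1.
      assert (/ INR q * rsum (fun i => Cmod (G' i) ^ 2) K' <= / INR q * beta 1%nat).
      { apply Rmult_le_compat_l. left. apply Rinv_0_lt_compat. auto. auto. }
      lra.
Qed.

Lemma csum_const (c : C) K : csum (fun _ => c) K = Cmult (RtoC (INR K)) c.
Proof. induction K; simpl. apply injective_projections; simpl; ring.
  rewrite IHK. destruct K; apply injective_projections; simpl; ring. Qed.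

Lemma csum_plus (a b : nat -> C) K : csum (fun i => Cplus (a i) (b i)) K = Cplus (csum a K) (csum b K).
Proof. induction K; simpl. apply injective_projections; simpl; ring.
  rewrite IHK. apply injective_projections; simpl; ring. Qed.

Lemma csum_delta (X : C) m : csum (fun j => if Nat.eqb j 0 then X else 0%C) (S m) = X.
Proof. induction m. simpl. apply injective_projections; simpl; ring.
  simpl. simpl in IHm. rewrite IHm. apply injective_projections; simpl; ring. Qed.

Lemma F_step n (hn : (2 <= n)%nat) T (hW : is_adjoint_W n T) (c0 : C) (zs : nat -> nat -> C) D
  (HD : forall l, (1 <= D l)%nat) (Hz0 : forall l, zs l 0%nat = 0%C)
  (HF : in_H2 (F n c0 (zs : nat -> nat -> C) D)) :
  Nat.iter (D 0%nat) T (F n c0 (zs : nat -> nat -> C) D) =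
  F n (Cplus c0 (csum (zs 0%nat) (n ^ D 0%nat))) (fun l => zs (S l)) (fun l => D (S l)).
Proof.
  apply functional_extensionality. intros j.
  rewrite iter_formula with (n := n) by (auto; lia).
  set (q := (n ^ D 0%nat)%nat).
  assert (Hq : (2 <= q)%nat) by (apply pow_ge2; auto).
  assert (Hqr : 0 < INR q) by (apply INR_pos_pow; lia).
  unfold F at 2. destruct (Nat.eqb_spec j 0).
  - subst j. rewrite (csum_ext _ (fun r => Cplus (zs 0%nat r) (if Nat.eqb r 0 then c0 else 0%C))).
    + rewrite csum_plus. replace q with (S (q - 1)) at 2 by lia. rewrite csum_delta.
      apply injective_projections; simpl; ring.
    + intros r Hr. rewrite Nat.mul_0_r, Nat.add_0_l. unfold F.
      destruct (Nat.eqb_spec r 0). subst r. rewrite Hz0. apply injective_projections; simpl; ring.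
      rewrite G_unfold by auto. fold q. destruct (Nat.ltb_spec r q); [|lia].
      apply injective_projections; simpl; ring.
  - rewrite (csum_ext _ (fun _ => Cmult (RtoC (/ INR q)) (G n (fun l => zs (S l)) (fun l => D (S l)) j))).
    + rewrite csum_const. apply injective_projections; simpl; field; lra.
    + intros r Hr. unfold F. destruct (Nat.eqb_spec (q * j + r) 0). lia.
      unfold q. apply G_block; auto. lia.
Qed.

Fixpoint Msum (D : nat -> nat) (k : nat) : nat :=
  match k with O => O | S k => (D k + Msum D k)%nat end.

Lemma F_iter n (hn : (2 <= n)%nat) T (hW : is_adjoint_W n T) (c0 : C) (zs : nat -> nat -> C) D
  (HD : forall l, (1 <= D l)%nat) (Hz0 : forall l, zs l 0%nat = 0%C)
  (HF : in_H2 (F n c0 (zs : nat -> nat -> C) D)) k :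
  Nat.iter (Msum D k) T (F n c0 (zs : nat -> nat -> C) D) =
  F n (Cplus c0 (csum (fun l => csum (zs l) (n ^ D l)) k)) (fun l => zs (k + l)%nat) (fun l => D (k + l)%nat).
Proof.
  induction k.
  - simpl. f_equal. apply injective_projections; simpl; ring.
  - simpl Msum. rewrite Nat.iter_add, IHk.
    assert (HF' : in_H2 (F n (Cplus c0 (csum (fun l => csum (zs l) (n ^ D l)) k)) (fun l => zs (k + l)%nat) (fun l => D (k + l)%nat))).
    { rewrite <- IHk. apply (iter_H2 n T hW); auto. }
    pose proof (F_step n hn T hW _ (fun l => zs (k + l)%nat) (fun l => D (k + l)%nat)
       (fun l => HD _) (fun l => Hz0 _) HF') as Hs.
    simpl in Hs. rewrite Nat.add_0_r in Hs. rewrite Hs.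
    replace (fun l => zs (k + S l)%nat) with (fun l => zs (S k + l)%nat)
      by (apply functional_extensionality; intros; f_equal; lia).
    replace (fun l => D (k + S l)%nat) with (fun l => D (S k + l)%nat)
      by (apply functional_extensionality; intros; f_equal; lia).
    f_equal. simpl. apply injective_projections; simpl; ring.
Qed.

Definition zs0 (zs : nat -> nat -> C) : nat -> nat -> C :=
  fun l => if Nat.eqb l 0 then (fun _ => 0%C) else zs l.

Lemma F_diff n (hn : (2 <= n)%nat) (c : C) (zs : nat -> nat -> C) D (HD : forall l, (1 <= D l)%nat) (a : nat -> C) :
  a 0%nat = c -> (forall i, (1 <= i)%nat -> a i = zs 0%nat i) ->
  (forall i, (n ^ D 0%nat <= i)%nat -> zs 0%nat i = 0%C) ->
  forall i, Cminus (F n c (zs : nat -> nat -> C) D i) (a i) = G n (zs0 zs) D i.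
Proof.
  intros Ha0 Ha Hsup i. unfold F. rewrite (G_unfold n hn (zs0 zs)) by auto.
  destruct (Nat.eqb_spec i 0).
  - subst i. rewrite Ha0. destruct (Nat.ltb_spec 0 (n ^ D 0%nat)). unfold zs0; simpl; apply injective_projections; simpl; ring. pose proof (pow_ge2 n (D 0%nat) hn (HD 0%nat)); lia.
  - rewrite G_unfold by auto. rewrite Ha by lia. destruct (Nat.ltb_spec i (n ^ D 0%nat)).
    + simpl. apply injective_projections; simpl; ring.
    + rewrite Hsup by auto. replace (fun l => zs0 zs (S l)) with (fun l => zs (S l)) by reflexivity. apply injective_projections; simpl; ring.
Qed.

Lemma G0_norm n (hn : (2 <= n)%nat) (zs : nat -> nat -> C) D (beta : nat -> R) (HD : forall l, (1 <= D l)%nat) :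
  (forall k, 0 <= beta k) ->
  (forall k, PS (zs (S k)) (n ^ D (S k)) + beta (S (S k)) / INR (n ^ D (S k)) <= beta (S k)) ->
  forall K, PS (G n (zs0 zs) D) K <= beta 1%nat / INR (n ^ D 0%nat).
Proof.
  intros Hb Hz K.
  apply (G_norm n hn K (zs0 zs) D (fun k => match k with O => beta 1%nat / INR (n ^ D 0%nat) | _ => beta k end)); auto.
  - intros [|k]. apply Rdiv_le_0_compat. auto. apply INR_pos_pow; auto. auto.
  - intros [|k].
    + unfold zs0; simpl. unfold PS. rewrite (rsum_ext _ (fun _ => 0)) by (intros; rewrite Cmod_0; ring).
      rewrite rsum_const. lra.
    + apply Hz.
Qed.

Lemma rsum_ind0 (X : R) K : 0 <= X -> rsum (fun i => if Nat.eqb i 0 then X else 0) K <= X.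
Proof. intros. destruct K. simpl. lra. rewrite rsum_delta. lra. Qed.

Lemma F_norm n (c : C) (zs : nat -> nat -> C) D K : PS (F n c (zs : nat -> nat -> C) D) K <= Cmod c ^ 2 + PS (G n (zs : nat -> nat -> C) D) K.
Proof.
  unfold PS. apply Rle_trans with (rsum (fun i => (if Nat.eqb i 0 then Cmod c ^ 2 else 0) + Cmod (G n zs D i) ^ 2) K).
  - apply rsum_le. intros i Hi. unfold F. destruct (Nat.eqb_spec i 0).
    pose proof (pow2_ge_0 (Cmod (G n zs D i))). lra.
    lra.
  - rewrite rsum_plus. pose proof (rsum_ind0 (Cmod c ^ 2) K (pow2_ge_0 _)). lra.
Qed.

Definition comp (y : nat -> C) (N L : nat) (s : C) : nat -> C := fun i =>
  if Nat.eqb i 0 then y 0%nat else if Nat.ltb i N then y i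
  else if Nat.ltb i (N + L) then Cmult (RtoC (/ INR L)) (Cminus s (Cminus (csum y N) (y 0%nat)))
  else 0%C.
Definition zero0 (x : nat -> C) : nat -> C := fun i => if Nat.eqb i 0 then 0%C else x i.
Definition trunc (y : nat -> C) (N : nat) : nat -> C := fun i => if Nat.ltb i N then y i else 0%C.

Lemma comp_sum (y : nat -> C) N L (s : C) M : (1 <= N)%nat -> (1 <= L)%nat -> (N + L <= M)%nat ->
  csum (zero0 (comp y N L s)) M = s.
Proof.
  intros HN HL HM. replace M with (N + L + (M - (N + L)))%nat by lia.
  rewrite csum_split. rewrite (csum_zero _ (M - (N + L))).
  2:{ intros i Hi. unfold zero0, comp. destruct (Nat.eqb_spec (N + L + i) 0). auto.
      destruct (Nat.ltb_spec (N + L + i) N). lia. destruct (Nat.ltb_spec (N + L + i) (N + L)). lia. auto. }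
  rewrite csum_split.
  rewrite (csum_ext _ (fun i => Cplus (y i) (if Nat.eqb i 0 then Copp (y 0%nat) else 0%C)) N).
  2:{ intros i Hi. unfold zero0, comp. destruct (Nat.eqb_spec i 0). subst. apply injective_projections; simpl; ring.
      destruct (Nat.ltb_spec i N). 2: lia. apply injective_projections; simpl; ring. }
  rewrite csum_plus. replace N with (S (N - 1)) at 2 by lia. rewrite csum_delta.
  rewrite (csum_ext _ (fun _ => Cmult (RtoC (/ INR L)) (Cminus s (Cminus (csum y N) (y 0%nat)))) L).
  2:{ intros i Hi. unfold zero0, comp. destruct (Nat.eqb_spec (N + i) 0). lia.
      destruct (Nat.ltb_spec (N + i) N). lia. destruct (Nat.ltb_spec (N + i) (N + L)). auto. lia. }
  rewrite csum_const. assert (0 < INR L) by (apply lt_0_INR; lia).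
  apply injective_projections; simpl; field; lra.
Qed.

Lemma rsum_interval c N L K : 0 <= c ->
  rsum (fun i => if andb (Nat.leb N i) (Nat.ltb i (N + L)) then c else 0) K <= INR L * c.
Proof.
  intros Hc. set (f := fun i => if andb (Nat.leb N i) (Nat.ltb i (N + L)) then c else 0).
  assert (Hf : forall i, 0 <= f i) by (intros; unfold f; destruct andb; lra).
  apply Rle_trans with (rsum f (N + L + K)). apply rsum_mono; auto; lia.
  rewrite !rsum_split. rewrite (rsum_ext f (fun _ => 0) N).
  2:{ intros i Hi. unfold f. destruct (Nat.leb_spec N i). lia. reflexivity. }
  rewrite (rsum_ext _ (fun _ => c) L).
  2:{ intros i Hi. unfold f. destruct (Nat.leb_spec N (N + i)). destruct (Nat.ltb_spec (N + i) (N + L)). reflexivity. lia. lia. }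
  rewrite (rsum_ext _ (fun _ => 0) K).
  2:{ intros i Hi. unfold f. destruct (Nat.leb_spec N (N + L + i)). destruct (Nat.ltb_spec (N + L + i) (N + L)). lia. reflexivity. lia. }
  rewrite !rsum_const. lra.
Qed.

Lemma comp_err (y : nat -> C) N L (s : C) K : (1 <= N)%nat -> (1 <= L)%nat ->
  PS (fun i => Cminus (comp y N L s i) (trunc y N i)) K <= Cmod (Cminus s (Cminus (csum y N) (y 0%nat))) ^ 2 / INR L.
Proof.
  intros HN HL. set (w := Cmod (Cminus s (Cminus (csum y N) (y 0%nat))) ^ 2).
  assert (HLr : 0 < INR L) by (apply lt_0_INR; lia).
  unfold PS. apply Rle_trans with (rsum (fun i => if andb (Nat.leb N i) (Nat.ltb i (N + L)) then w / INR L ^ 2 else 0) K).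
  - apply rsum_le. intros i Hi. unfold comp, trunc.
    destruct (Nat.eqb_spec i 0).
    + subst. destruct (Nat.leb_spec N 0). lia. destruct (Nat.ltb_spec 0 N). 2: lia.
      simpl. replace (Cminus (y 0%nat) (y 0%nat)) with (RtoC 0) by (apply injective_projections; simpl; ring).
      rewrite Cmod_0. lra.
    + destruct (Nat.ltb_spec i N).
      * destruct (Nat.leb_spec N i). lia. simpl.
        replace (Cminus (y i) (y i)) with (RtoC 0) by (apply injective_projections; simpl; ring).
        rewrite Cmod_0. lra.
      * destruct (Nat.leb_spec N i). 2: lia. cbv beta iota. destruct (Nat.ltb_spec i (N + L)).
        -- replace (Cminus _ 0%C) with (Cmult (RtoC (/ INR L)) (Cminus s (Cminus (csum y N) (y 0%nat))))
             by (apply injective_projections; simpl; ring).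
           rewrite Cmod_scal_sq. unfold w. cbn [andb]. right. field. lra. left. apply Rinv_0_lt_compat. auto.
        -- replace (Cminus 0%C 0%C) with (RtoC 0) by (apply injective_projections; simpl; ring).
           rewrite Cmod_0. simpl. lra.
  - eapply Rle_trans. apply rsum_interval. apply Rdiv_le_0_compat. apply pow2_ge_0. nra.
    right. unfold w. field. lra.
Qed.

Lemma trunc_tail_rsum (f : nat -> R) N K :
  rsum (fun i => if Nat.ltb i N then 0 else f i) K + rsum f N = rsum f (Nat.max K N).
Proof.
  induction K. simpl. ring.
  cbn [rsum]. destruct (Nat.ltb_spec K N).
  - replace (Nat.max (S K) N) with N by lia. replace (Nat.max K N) with N in IHK by lia. lra.
  - replace (Nat.max (S K) N) with (S K) by lia. replace (Nat.max K N) with K in IHK by lia. cbn [rsum]. lra.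
Qed.

Lemma trunc_err (g : nat -> C) N d : (forall K, PS g K <= PS g N + d) ->
  forall K, PS (fun i => Cminus (trunc g N i) (g i)) K <= d.
Proof.
  intros H K. unfold PS.
  rewrite (rsum_ext _ (fun i => if Nat.ltb i N then 0 else Cmod (g i) ^ 2)).
  - pose proof (trunc_tail_rsum (fun i => Cmod (g i) ^ 2) N K). specialize (H (Nat.max K N)).
    unfold PS in H. lra.
  - intros i Hi. unfold trunc. destruct (Nat.ltb_spec i N).
    replace (Cminus (g i) (g i)) with (RtoC 0) by (apply injective_projections; simpl; ring). rewrite Cmod_0. ring.
    replace (Cminus 0%C (g i)) with (Copp (g i)) by (apply injective_projections; simpl; ring). rewrite Cmod_opp. auto.
Qed.

Lemma Z2N_nonpos z : (z <= 0)%Z -> Z.to_nat z = 0%nat.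
Proof. destruct z; simpl; auto; lia. Qed.

Definition natceil (r : R) : nat := Z.to_nat (up r).

Lemma natceil_ge r : r <= INR (natceil r).
Proof.
  unfold natceil. destruct (archimed r) as [H1 H2].
  destruct (Z_lt_le_dec (up r) 0).
  - rewrite Z2N_nonpos by lia. simpl. apply IZR_lt in l. lra.
  - rewrite INR_IZR_INZ, Z2Nat.id by lia. lra.
Qed.

Lemma div_le_helper (X Y d : R) : 0 < Y -> X <= d * Y -> X / Y <= d.
Proof. intros HY H. unfold Rdiv. apply Rmult_le_reg_r with Y; auto.
  rewrite Rmult_assoc, Rinv_l, Rmult_1_r by lra. lra. Qed.

Lemma ceil_div (X d : R) : 0 <= X -> 0 < d -> X / INR (S (natceil (X / d))) <= d.
Proof.
  intros HX Hd. pose proof (natceil_ge (X / d)). pose proof (pos_INR (natceil (X / d))).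
  apply div_le_helper. rewrite S_INR; lra. rewrite S_INR.
  assert (X = d * (X / d)) by (field; lra).
  assert (d * (X / d) <= d * INR (natceil (X / d))) by (apply Rmult_le_compat_l; lra). nra.
Qed.

Lemma pow_gt_INR n m : (2 <= n)%nat -> INR m < INR (n ^ m).
Proof. intros. apply lt_INR. apply Nat.pow_gt_lin_r. lia. Qed.

Lemma PS_support (a : nat -> C) M K : (forall i, (M <= i)%nat -> a i = 0%C) -> (M <= K)%nat -> PS a K = PS a M.
Proof.
  intros H HK. unfold PS. replace K with (M + (K - M))%nat by lia. rewrite rsum_split.
  rewrite (rsum_ext (fun i => Cmod (a (M + i)%nat) ^ 2) (fun _ => 0) (K - M)). rewrite rsum_const. ring.
  intros i Hi. rewrite H by lia. rewrite Cmod_0. ring.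
Qed.

Lemma sum3 (u a b c : nat -> C) Ba Bb Bc :
  (forall i, u i = Cplus (Cplus (a i) (b i)) (c i)) ->
  (forall K, PS a K <= Ba) -> (forall K, PS b K <= Bb) -> (forall K, PS c K <= Bc) ->
  forall K, PS u K <= 2 * Ba + 4 * Bb + 4 * Bc.
Proof.
  intros Hu Ha Hb Hc K.
  apply Rle_trans with (2 * PS a K + 4 * PS b K + 4 * PS c K).
  - unfold PS. rewrite <- !rsum_scal, <- !rsum_plus. apply rsum_le. intros i _.
    rewrite Hu. replace (Cplus (Cplus (a i) (b i)) (c i)) with (Cplus (a i) (Cplus (b i) (c i)))
      by (apply injective_projections; simpl; ring).
    pose proof (Cmod_sq_plus (a i) (Cplus (b i) (c i))).
    pose proof (Cmod_sq_plus (b i) (c i)). lra.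
  - specialize (Ha K). specialize (Hb K). specialize (Hc K). lra.
Qed.

Lemma comp_zero0_support (y : nat -> C) N L (s : C) i : (N + L <= i)%nat -> zero0 (comp y N L s) i = 0%C.
Proof. intros H. unfold zero0, comp. destruct (Nat.eqb_spec i 0). auto.
  destruct (Nat.ltb_spec i N). lia. destruct (Nat.ltb_spec i (N + L)). lia. auto. Qed.

Theorem dense_per n (hn : (2 <= n)%nat) T (hW : is_adjoint_W n T) : dense_periodic_points T.
Proof.
  intros g Hg eps Heps.
  set (d := eps ^ 2 / 20). assert (Hd : 0 < d) by (unfold d; nra).
  destruct (H2_tail g Hg d Hd) as [N0 HN0].
  set (N := S N0).
  assert (HgN : forall K, PS g K <= PS g N + d).
  { intros K. specialize (HN0 K). pose proof (PS_mono g N0 N (le_S _ _ (le_n _))). lra. }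
  set (s' := Cminus 0%C (Cminus (csum g N) (g 0%nat))).
  set (L := S (natceil (Cmod s' ^ 2 / d))).
  assert (HLr : 0 < INR L) by (apply lt_0_INR; unfold L; lia).
  assert (HL : Cmod s' ^ 2 / INR L <= d).
  { unfold L. apply ceil_div; auto. apply pow2_ge_0. }
  set (x := comp g N L 0%C). set (x0 := zero0 x).
  set (P := PS x0 (N + L)).
  assert (HP : 0 <= P) by apply PS_nonneg.
  set (m := (N + L + natceil (2 * P / d))%nat).
  set (Q := (n ^ m)%nat).
  assert (HQ1 : (N + L <= Q)%nat) by (unfold Q; pose proof (Nat.pow_gt_lin_r n m); unfold m in *; lia).
  assert (HQr : 2 * P / d < INR Q).
  { unfold Q. pose proof (natceil_ge (2 * P / d)). pose proof (pow_gt_INR n m hn).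
    assert (INR (natceil (2 * P / d)) <= INR m) by (apply le_INR; unfold m; lia). lra. }
  assert (HQ2 : (2 <= Q)%nat) by (apply pow_ge2; auto; unfold m, N; lia).
  assert (HQ2r : 2 <= INR Q) by (apply (le_INR 2); auto).
  assert (HPQ : PS x0 Q = P) by (apply PS_support; auto; intros; apply comp_zero0_support; auto).
  set (zs := fun _ : nat => x0). set (D := fun _ : nat => m).
  assert (HD : forall l, (1 <= D l)%nat) by (intros; unfold D, m, N; lia).
  assert (Hz0 : forall l, zs l 0%nat = 0%C) by reflexivity.
  assert (Hbeta : forall k, PS (zs k) (n ^ D k) + (fun _ => 2 * P) (S k) / INR (n ^ D k) <= (fun _ => 2 * P) k).
  { intros k. unfold zs, D. fold Q. rewrite HPQ.
    assert (2 * P / INR Q <= P). { apply Rmult_le_reg_r with (INR Q). lra. unfold Rdiv.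
      rewrite Rmult_assoc, Rinv_l by lra. nra. } lra. }
  set (p := F n (g 0%nat) zs D).
  assert (Hp : in_H2 p).
  { refine (proj1 (bnd_H2 p (Cmod (g 0%nat) ^ 2 + 2 * P) _)). intros K.
    eapply Rle_trans. apply F_norm. apply Rplus_le_compat_l.
    apply (G_norm n hn K zs D (fun _ => 2 * P)); auto. intros; lra. }
  exists p. split; [exact Hp|]. split.
  - exists m. split. unfold m, N; lia.
    pose proof (F_step n hn T hW (g 0%nat) zs D HD Hz0 Hp) as Hs.
    assert (Hs' : Nat.iter m T p = F n (Cplus (g 0%nat) (csum x0 Q)) zs D) by exact Hs.
    rewrite Hs'. unfold x0, x. rewrite comp_sum by (auto; unfold N, L; lia).
    unfold p. f_equal. apply injective_projections; simpl; ring.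
  - apply (H2norm_lt _ (2 * (2 * P / INR Q) + 4 * d + 4 * d)); auto.
    2:{ assert (2 * P / INR Q <= d). { apply Rmult_le_reg_r with (INR Q). lra. unfold Rdiv.
          rewrite Rmult_assoc, Rinv_l by lra. apply Rmult_le_reg_l with (/ d). apply Rinv_0_lt_compat; auto.
          replace (/ d * (2 * P * 1)) with (2 * P / d) by (field; lra).
          replace (/ d * (d * INR Q)) with (INR Q) by (field; lra). lra. }
        unfold d in *. lra. }
    apply (sum3 _ (G n (zs0 zs) D) (fun i => Cminus (x i) (trunc g N i)) (fun i => Cminus (trunc g N i) (g i))).
    + intros i. unfold H2sub, p. rewrite <- (F_diff n hn (g 0%nat) zs D HD x).
      * apply injective_projections; simpl; ring.
      * reflexivity.
      * intros i0 Hi0. unfold zs, x0, zero0. destruct (Nat.eqb_spec i0 0). lia. auto.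
      * intros i0 Hi0. unfold zs. apply comp_zero0_support. unfold D in Hi0. fold Q in Hi0. lia.
    + intros K. pose proof (G0_norm n hn zs D (fun _ => 2 * P) HD (fun _ => ltac:(lra)) (fun k => Hbeta (S k)) K).
      unfold D in H at 2. fold Q in H. exact H.
    + intros K. unfold x. eapply Rle_trans. apply comp_err; unfold N, L; lia. fold s'. exact HL.
    + apply trunc_err. auto.
Qed.

Definition str (c j : nat) : nat := fst (Cantor.of_nat (Nat.iter j (fun x => snd (Cantor.of_nat x)) c)).

Lemma str_surj P : forall h : nat -> nat, exists c, forall p, (p < P)%nat -> str c p = h p.
Proof.
  induction P; intros h. exists 0%nat. intros; lia.
  destruct (IHP (fun p => h (S p))) as [c' Hc'].
  exists (Cantor.to_nat (h 0%nat, c')). intros p Hp. destruct p.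
  - unfold str. change (Nat.iter 0 ?f ?x) with x. rewrite Cantor.cancel_of_to. reflexivity.
  - unfold str. rewrite Nat.iter_succ_r. rewrite Cantor.cancel_of_to. change (snd (h 0%nat, c')) with c'. apply Hc'. lia.
Qed.

Definition zr (a b d : nat) : R := (INR a - INR b) / INR (S d).
Definition entry (c2 d j : nat) : C :=
  (zr (str c2 (4 * j)) (str c2 (4 * j + 1)) d, zr (str c2 (4 * j + 2)) (str c2 (4 * j + 3)) d).
Definition Nlen (c : nat) : nat := S (fst (Cantor.of_nat c)).
Definition vdec (c : nat) : nat -> C := fun j =>
  if Nat.ltb j (Nlen c) then entry (snd (Cantor.of_nat (snd (Cantor.of_nat c)))) (fst (Cantor.of_nat (snd (Cantor.of_nat c)))) j
  else 0%C.

Lemma vdec_trunc c i : vdec c i = trunc (vdec c) (Nlen c) i.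
Proof. unfold trunc, vdec. destruct (Nat.ltb_spec i (Nlen c)); auto. Qed.

Lemma Z_nat_pair z : INR (Z.to_nat z) - INR (Z.to_nat (- z)) = IZR z.
Proof.
  destruct (Z_lt_le_dec z 0).
  - rewrite (Z2N_nonpos z) by lia. rewrite (INR_IZR_INZ (Z.to_nat (- z))), Z2Nat.id by lia. rewrite opp_IZR. simpl (INR 0). ring.
  - rewrite (Z2N_nonpos (- z)) by lia. rewrite (INR_IZR_INZ (Z.to_nat z)), Z2Nat.id by lia. simpl (INR 0). ring.
Qed.

Definition rnd (r : R) (d : nat) : Z := (up (r * INR (S d)) - 1)%Z.

Lemma rnd_spec r d : Rabs (r - IZR (rnd r d) / INR (S d)) <= / INR (S d).
Proof.
  unfold rnd. destruct (archimed (r * INR (S d))) as [H1 H2].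
  assert (Hs : 0 < INR (S d)) by (apply lt_0_INR; lia).
  rewrite minus_IZR.
  set (s := INR (S d)) in *. set (u := IZR (up (r * s))) in *.
  assert (Hi : 0 < / s) by (apply Rinv_0_lt_compat; lra).
  assert (E : r - (u - IZR 1) / s = (r * s - u + 1) * / s) by (simpl; field; lra).
  rewrite E. rewrite Rabs_right.
  - rewrite <- (Rmult_1_l (/ s)) at 2. apply Rmult_le_compat_r; lra.
  - apply Rle_ge, Rmult_le_pos; lra.
Qed.

Lemma code_dense g : in_H2 g -> forall delta, 0 < delta ->
  exists c, forall K, PS (fun i => Cminus (vdec c i) (g i)) K <= delta.
Proof.
  intros Hg delta Hdel.
  destruct (H2_tail g Hg (delta / 8) ltac:(lra)) as [N0 HN0].
  set (N := S N0).
  assert (HgN : forall K, PS g K <= PS g N + delta / 8).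
  { intros K. specialize (HN0 K). pose proof (PS_mono g N0 N (le_S _ _ (le_n _))). lra. }
  set (d := natceil (8 * INR N / delta)).
  assert (Hs : 0 < INR (S d)) by (apply lt_0_INR; lia).
  assert (HNd : 8 * INR N / delta <= INR (S d)) by (pose proof (natceil_ge (8 * INR N / delta)); rewrite S_INR; fold d in H; lra).
  set (zre := fun j => rnd (Re (g j)) d). set (zim := fun j => rnd (Im (g j)) d).
  set (zsel := fun j r => if Nat.eqb r 0 then zre j else if Nat.eqb r 1 then (- zre j)%Z
                          else if Nat.eqb r 2 then zim j else (- zim j)%Z).
  destruct (str_surj (4 * N) (fun p => Z.to_nat (zsel (p / 4) (p mod 4))%nat)) as [c2 Hc2].
  exists (Cantor.to_nat (N0, Cantor.to_nat (d, c2))).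
  set (c := Cantor.to_nat (N0, Cantor.to_nat (d, c2))).
  assert (HNl : Nlen c = N) by (unfold Nlen, c; rewrite Cantor.cancel_of_to; reflexivity).
  assert (Hent : forall j, (j < N)%nat -> vdec c j = (IZR (zre j) / INR (S d), IZR (zim j) / INR (S d))).
  { intros j Hj. unfold vdec. rewrite HNl. destruct (Nat.ltb_spec j N). 2: lia.
    unfold c. rewrite Cantor.cancel_of_to. cbn [fst snd]. rewrite Cantor.cancel_of_to. cbn [fst snd]. unfold entry, zr.
    assert (E : forall r, (r < 4)%nat -> str c2 (4 * j + r) = Z.to_nat (zsel j r)).
    { intros r Hr. rewrite Hc2 by lia. f_equal. f_equal.
      rewrite Nat.mul_comm, Nat.div_add_l by lia. rewrite Nat.div_small by lia. lia.
      rewrite Nat.add_comm, Nat.mul_comm, Nat.Div0.mod_add. apply Nat.mod_small. lia. }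
    assert (E0 : str c2 (4 * j) = Z.to_nat (zsel j 0%nat)) by (rewrite <- (E 0%nat) by lia; f_equal; lia).
    rewrite E0, (E 1%nat), (E 2%nat), (E 3%nat) by lia. unfold zsel. cbn [Nat.eqb]. rewrite !Z_nat_pair. reflexivity. }
  intros K.
  apply Rle_trans with (2 * (2 * INR N / INR (S d) ^ 2) + 4 * (delta / 8) + 4 * 0).
  2:{ assert (2 * INR N / INR (S d) ^ 2 <= delta / 4).
      { assert (H1 : 1 <= INR (S d)) by (rewrite S_INR; pose proof (pos_INR d); lra).
        assert (H0 : 0 <= INR N) by apply pos_INR.
        assert (A : 2 * INR N / INR (S d) <= delta / 4).
        { apply div_le_helper. lra.
          assert (delta / 4 * (8 * INR N / delta) = 2 * INR N) by (field; lra).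
          assert (delta / 4 * (8 * INR N / delta) <= delta / 4 * INR (S d)) by (apply Rmult_le_compat_l; lra).
          lra. }
        replace (2 * INR N / INR (S d) ^ 2) with ((2 * INR N / INR (S d)) / INR (S d)) by (field; lra).
        apply div_le_helper. lra.
        assert (0 <= 2 * INR N / INR (S d)) by (apply Rdiv_le_0_compat; lra).
        nra. }
      lra. }
  apply (sum3 _ (fun i => Cminus (vdec c i) (trunc g N i)) (fun i => Cminus (trunc g N i) (g i)) (fun _ => 0%C)).
  - intros i. apply injective_projections; simpl; ring.
  - intros K'. unfold PS. apply Rle_trans with (INR N * (2 / INR (S d) ^ 2)).
    2:{ right. field. lra. }
    eapply Rle_trans.
    2:{ apply (rsum_interval (2 / INR (S d) ^ 2) 0 N K'). apply Rdiv_le_0_compat. lra. apply pow_lt. lra. }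
    apply rsum_le. intros i _. destruct (Nat.ltb_spec i N).
    + rewrite Hent by auto. unfold trunc. destruct (Nat.ltb_spec i N). 2: lia.
      rewrite Cmod2_alt.
      pose proof (rnd_spec (Re (g i)) d) as R0. pose proof (rnd_spec (Im (g i)) d) as R1.
      fold (zre i) in R0. fold (zim i) in R1.
      replace (Re (Cminus (IZR (zre i) / INR (S d), IZR (zim i) / INR (S d)) (g i)))
        with (- (Re (g i) - IZR (zre i) / INR (S d))) by (unfold Re; simpl; ring).
      replace (Im (Cminus (IZR (zre i) / INR (S d), IZR (zim i) / INR (S d)) (g i)))
        with (- (Im (g i) - IZR (zim i) / INR (S d))) by (unfold Im; simpl; ring).
      set (u1 := Re (g i) - IZR (zre i) / INR (S d)) in *.
      set (u2 := Im (g i) - IZR (zim i) / INR (S d)) in *.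
      set (e := / INR (S d)) in *.
      apply Rabs_le_between in R0. apply Rabs_le_between in R1.
      destruct (Nat.leb_spec 0 i). 2: lia. destruct (Nat.ltb_spec i (0 + N)). 2: lia. cbn [andb].
      replace (2 / INR (S d) ^ 2) with (2 * e ^ 2) by (unfold e; field; lra).
      nra.
    + unfold vdec, trunc. rewrite HNl. destruct (Nat.ltb_spec i N). lia.
      replace (Cminus 0%C 0%C) with (RtoC 0) by (apply injective_projections; simpl; ring).
      rewrite Cmod_0. destruct (Nat.leb_spec 0 i); destruct (Nat.ltb_spec i (0 + N)); simpl; try lra; lia.
  - apply trunc_err. auto.
  - intros K'. unfold PS. rewrite (rsum_ext _ (fun _ => 0)). rewrite rsum_const. lra.
    intros; rewrite Cmod_0; ring.
Qed.



Definition cd (k : nat) : nat := fst (Cantor.of_nat k).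
Definition vv (k : nat) : nat -> C := vdec (cd k).
Definition Nk (k : nat) : nat := Nlen (cd k).
Definition ck (k : nat) : C := vv k 0%nat.
Definition Dl (k : nat) : C := Cminus (ck (S k)) (ck k).
Definition sp (k : nat) : C := Cminus (Dl k) (Cminus (csum (vv k) (Nk k)) (vv k 0%nat)).
Definition Lk (k : nat) : nat := S (natceil (Cmod (sp k) ^ 2 / / 2 ^ k)).
Definition ak (k : nat) : nat -> C := comp (vv k) (Nk k) (Lk k) (Dl k).
Definition zsh (k : nat) : nat -> C := zero0 (ak k).
Definition bk (k : nat) : R := PS (zsh k) (Nk k + Lk k).
Definition Dk (k : nat) : nat := (Nk k + Lk k + natceil ((bk (S k) + 1) / / 2 ^ k))%nat.
Definition beta (k : nat) : R := bk k + 1.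

Lemma Nk_pos k : (1 <= Nk k)%nat.
Proof. unfold Nk, Nlen. lia. Qed.
Lemma Lk_pos k : (1 <= Lk k)%nat.
Proof. unfold Lk. lia. Qed.
Lemma Dk_pos k : (1 <= Dk k)%nat.
Proof. unfold Dk. pose proof (Nk_pos k). lia. Qed.

Lemma zsh0 k : zsh k 0%nat = 0%C.
Proof. reflexivity. Qed.

Lemma zsh_supp k i : (Nk k + Lk k <= i)%nat -> zsh k i = 0%C.
Proof. intros. unfold zsh, ak. apply comp_zero0_support. auto. Qed.

Lemma Dk_big n (hn : (2 <= n)%nat) k : (Nk k + Lk k <= n ^ Dk k)%nat.
Proof. pose proof (Nat.pow_gt_lin_r n (Dk k)). unfold Dk in *. lia. Qed.

Lemma bk_nonneg k : 0 <= bk k.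
Proof. apply PS_nonneg. Qed.

Lemma pow2_pos k : 0 < 2 ^ k.
Proof. apply pow_lt. lra. Qed.

Lemma ceil_bound (X d : R) (M : nat) : 0 <= X -> 0 < d -> (natceil (X / d) <= M)%nat -> (0 < M)%nat ->
  X / INR M <= d.
Proof.
  intros HX Hd HM HM0. pose proof (natceil_ge (X / d)). apply le_INR in HM.
  assert (0 < INR M) by (apply lt_0_INR; lia).
  apply div_le_helper. auto.
  assert (X = d * (X / d)) by (field; lra).
  assert (d * (X / d) <= d * INR M) by (apply Rmult_le_compat_l; lra). lra.
Qed.

Lemma decay n (hn : (2 <= n)%nat) k : beta (S k) / INR (n ^ Dk k) <= / 2 ^ k.
Proof.
  unfold beta. apply ceil_bound. pose proof (bk_nonneg (S k)); lra.
  apply Rinv_0_lt_compat, pow2_pos.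
  pose proof (Nat.pow_gt_lin_r n (Dk k)). unfold Dk in *. lia.
  apply Nat.neq_0_lt_0, Nat.pow_nonzero. lia.
Qed.

Lemma inv_pow2_le1 k : / 2 ^ k <= 1.
Proof. rewrite <- Rinv_1. apply Rinv_le_contravar. lra.
  induction k. simpl; lra. simpl. lra. Qed.

Lemma Hbeta n (hn : (2 <= n)%nat) k :
  PS (zsh k) (n ^ Dk k) + beta (S k) / INR (n ^ Dk k) <= beta k.
Proof.
  rewrite (PS_support _ (Nk k + Lk k)). 2: apply zsh_supp. 2: apply Dk_big; auto.
  pose proof (decay n hn k). pose proof (inv_pow2_le1 k). unfold beta at 2. unfold bk. lra.
Qed.

Lemma Hsum n (hn : (2 <= n)%nat) k : csum (zsh k) (n ^ Dk k) = Dl k.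
Proof. unfold zsh, ak. apply comp_sum. apply Nk_pos. apply Lk_pos. apply Dk_big; auto. Qed.

Lemma Htel k : Cplus (ck 0%nat) (csum Dl k) = ck k.
Proof.
  induction k. simpl. apply injective_projections; simpl; ring.
  cbn [csum]. unfold Dl at 2. rewrite <- IHk.
  generalize (ck (S k)) (ck 0%nat) (csum Dl k). intros u v w.
  apply injective_projections; simpl; ring.
Qed.

Lemma sp_bound k : Cmod (sp k) ^ 2 / INR (Lk k) <= / 2 ^ k.
Proof. unfold Lk. apply ceil_div. apply pow2_ge_0. apply Rinv_0_lt_compat, pow2_pos. Qed.

Theorem hyper n (hn : (2 <= n)%nat) T (hW : is_adjoint_W n T) : hypercyclic T.
Proof.
  set (f := F n (ck 0%nat) zsh Dk).
  assert (Hbnn : forall k, 0 <= beta k) by (intros; unfold beta; pose proof (bk_nonneg k); lra).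
  assert (Hf : in_H2 f).
  { refine (proj1 (bnd_H2 f (Cmod (ck 0%nat) ^ 2 + beta 0%nat) _)). intros K.
    eapply Rle_trans. apply F_norm. apply Rplus_le_compat_l.
    apply (G_norm n hn K zsh Dk beta); auto. apply Dk_pos. intros; apply Hbeta; auto. }
  exists f. split; [exact Hf|]. intros g Hg eps Heps.
  assert (He2 : 0 < eps ^ 2) by (apply pow_lt; lra).
  destruct (code_dense g Hg (eps ^ 2 / 16) ltac:(lra)) as [c Hc].
  set (K0 := natceil (24 / eps ^ 2)).
  set (k := Cantor.to_nat (c, K0)).
  assert (Hck : cd k = c) by (unfold cd, k; rewrite Cantor.cancel_of_to; reflexivity).
  assert (Hk : (K0 <= k)%nat) by (unfold k; pose proof (Cantor.to_nat_non_decreasing c K0); lia).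
  assert (Hsmall : / 2 ^ k <= eps ^ 2 / 24).
  { pose proof (natceil_ge (24 / eps ^ 2)). fold K0 in H.
    assert (INR K0 < 2 ^ K0) by (rewrite <- (pow_INR 2); apply (pow_gt_INR 2 K0); lia).
    assert (2 ^ K0 <= 2 ^ k) by (apply Rle_pow; [lra | auto]).
    assert (24 / eps ^ 2 <= 2 ^ k) by lra.
    assert (0 < 24 / eps ^ 2) by (apply Rdiv_lt_0_compat; lra).
    apply Rle_trans with (/ (24 / eps ^ 2)). apply Rinv_le_contravar; auto.
    right. field. lra. }
  exists (Msum Dk k).
  unfold f. rewrite (F_iter n hn T hW (ck 0%nat) zsh Dk Dk_pos zsh0 Hf k).
  rewrite (csum_ext _ Dl) by (intros; apply Hsum; auto). rewrite Htel.
  set (zs' := fun l => zsh (k + l)%nat). set (D' := fun l => Dk (k + l)%nat).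
  assert (HD' : forall l, (1 <= D' l)%nat) by (intros; apply Dk_pos).
  apply (H2norm_lt _ (2 * (beta (S k) / INR (n ^ Dk k)) + 4 * (Cmod (sp k) ^ 2 / INR (Lk k)) + 4 * (eps ^ 2 / 16))); auto.
  2:{ pose proof (decay n hn k). pose proof (sp_bound k). lra. }
  apply (sum3 _ (G n (zs0 zs') D') (fun i => Cminus (ak k i) (trunc (vv k) (Nk k) i)) (fun i => Cminus (vv k i) (g i))).
  - intros i. unfold H2sub. rewrite <- (F_diff n hn (ck k) zs' D' HD' (ak k)).
    + replace (trunc (vv k) (Nk k) i) with (vv k i) by (unfold vv, Nk; apply vdec_trunc). apply injective_projections; simpl; ring.
    + unfold ak, comp, ck. reflexivity.
    + intros i0 Hi0. unfold zs'. rewrite Nat.add_0_r. unfold zsh, zero0. destruct (Nat.eqb_spec i0 0). lia. auto.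
    + intros i0 Hi0. unfold zs'. rewrite Nat.add_0_r. apply zsh_supp. unfold D' in Hi0. rewrite Nat.add_0_r in Hi0.
      pose proof (Dk_big n hn k). lia.
  - intros K. pose proof (G0_norm n hn zs' D' (fun l => beta (k + l)%nat) HD' (fun l => Hbnn _)) as HG.
    assert (Hc' : forall l, PS (zs' (S l)) (n ^ D' (S l)) + beta (k + S (S l))%nat / INR (n ^ D' (S l)) <= beta (k + S l)%nat).
    { intros l. unfold zs', D'. replace (k + S (S l))%nat with (S (k + S l)) by lia. apply Hbeta; auto. }
    specialize (HG Hc' K). unfold D' in HG. rewrite Nat.add_0_r in HG. replace (k + 1)%nat with (S k) in HG by lia.
    exact HG.
  - intros K. unfold ak. apply comp_err. apply Nk_pos. apply Lk_pos.
  - intros K. unfold vv. rewrite Hck. apply Hc.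
Qed.


Theorem mainTheorem2 (n : nat) (hn : (2 <= n)%nat)
  (Wstar : (nat -> C) -> (nat -> C)) (hW : is_adjoint_W n Wstar) :
  devaney_chaotic Wstar.
Proof.
  split.
  - exact (hyper n hn Wstar hW).
  - exact (dense_per n hn Wstar hW).
Qed.
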